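(* Fix $\lambda>0$ and an initial $\boldsymbol\alpha^{(0)}\in\mathbb R^{2nK}_{\ge0}$. Assume a solver is available that returns the optimal solution of the sub-problem $\max_{\boldsymbol\alpha\ge\mathbf0}D^{\mathcal F}_\lambda(\boldsymbol\alpha)$ (equivalently of $\min_{\mathbf m_{\mathcal F}\ge\mathbf0}P^{\mathcal F}_\lambda(\mathbf m_{\mathcal F})$) for any given $\mathcal F\subseteq[p]$. Consider the working set method: for $t=1,2,\dots$, set $\mathcal W_t=\{k\in[p]:\mathbf C_{k,:}\boldsymbol\alpha^{(t-1)}>\lambda\}$ and let $\boldsymbol\alpha^{(t)}$ be the optimal solution of the sub-problem with $\mathcal F=\mathcal W_t$. Then after finitely many steps this method returns the optimal solution of the original problem, i.e. there is a finite $T$ such that $\boldsymbol\alpha^{(T)}$ is the optimal solution of $\max_{\boldsymbol\alpha\ge\mathbf0}D_\lambda(\boldsymbol\alpha)$.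
   Context: Let $n,K,p\ge1$ be integers, $[n]=\{1,\dots,n\}$. For each $i\in[n]$ let $\mathbf x_i\in\mathbb R^p$ have nonnegative entries and let $\mathcal D_i,\mathcal S_i\subseteq[n]$ be sets of size $K$. Put $\mathbf c_{ij}=(\mathbf x_i-\mathbf x_j)\circ(\mathbf x_i-\mathbf x_j)$ (entrywise product). Vectors in $\mathbb R^{2nK}$ are indexed by the pairs $(i,l)$, $l\in\mathcal D_i$ (''different-class pairs'') and $(i,j)$, $j\in\mathcal S_i$ (''same-class pairs''). $\mathbf C\in\mathbb R^{p\times2nK}$ has column $\mathbf c_{il}$ for each different-class pair and $-\mathbf c_{ij}$ for each same-class pair; $\mathbf C_{k,:}$ is its $k$-th row. Fix $L\ge U\ge0$, $\eta>0$; let $\mathbf t\in\mathbb R^{2nK}$ have entry $L$ at different-class pairs and $-U$ at same-class pairs; $\ell_s(x)=([s-x]_+)^2$ with $[z]_+=\max\{z,0\}$ (entrywise for vectors); $\mathbf1$ is the all-ones vector; for a vector $\mathbf v\in\mathbb R^p$ and $\mathcal F\subseteq[p]$, $\mathbf v_{\mathcal F}$ is the sub-vector of entries indexed by $\mathcal F$. The original primal and dual problems are $\min_{\mathbf m\in\mathbb R^p_{\ge0}}P_\lambda(\mathbf m)$ and $\max_{\boldsymbol\alpha\in\mathbb R^{2nK}_{\ge0}}D_\lambda(\boldsymbol\alpha)$, where $$P_\lambda(\mathbf m)=\sum_{i\in[n]}\Big[\sum_{l\in\mathcal D_i}\ell_L(\mathbf m^\top\mathbf c_{il})+\sum_{j\in\mathcal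 S_i}\ell_{-U}(-\mathbf m^\top\mathbf c_{ij})\Big]+\lambda\Big(\mathbf m^\top\mathbf1+\frac\eta2\|\mathbf m\|_2^2\Big),$$ $$D_\lambda(\boldsymbol\alpha)=-\frac14\|\boldsymbol\alpha\|_2^2+\mathbf t^\top\boldsymbol\alpha-\frac{\lambda\eta}2\|\mathbf m_\lambda(\boldsymbol\alpha)\|_2^2,\qquad\mathbf m_\lambda(\boldsymbol\alpha)=\frac1{\lambda\eta}[\mathbf C\boldsymbol\alpha-\lambda\mathbf1]_+.$$ For $\mathcal F\subseteq[p]$ the sub-problems fix $m_k=0$ for $k\notin\mathcal F$: $P^{\mathcal F}_\lambda(\mathbf m_{\mathcal F})$ is $P_\lambda$ with $\mathbf m$, $\mathbf c_{il}$, $\mathbf c_{ij}$ replaced by their sub-vectors indexed by $\mathcal F$ (minimized over $\mathbf m_{\mathcal F}\ge\mathbf0$), and $$D^{\mathcal F}_\lambda(\boldsymbol\alpha)=-\frac14\|\boldsymbol\alpha\|_2^2+\mathbf t^\top\boldsymbol\alpha-\frac{\lambda\eta}2\|\mathbf m_\lambda(\boldsymbol\alpha)_{\mathcal F}\|_2^2$$ (maximized over $\boldsymbol\alpha\ge\mathbf0$). *)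

(* Defs.v *)
From HB Require Import structures.
From mathcomp Require Import all_boot all_order all_algebra.
From mathcomp Require Import reals.
Set Implicit Arguments. Unset Strict Implicit. Unset Printing Implicit Defensive.
Import Order.TTheory GRing.Theory Num.Theory.
Local Open Scope ring_scope.

(* Index of a pair: (b, i, j) with b = true for a different-class pair
   (j \in D i) and b = false for a same-class pair (j \in S i). *)
Definition valid_pair (n : nat) (D S : 'I_n -> {set 'I_n})
  (u : bool * 'I_n * 'I_n) : bool :=
  let: (b, i, j) := u in if b then j \in D i else j \in S i.

(* The index set of R^{2nK}: all valid pairs. *)
Definition pidx (n : nat) (D S : 'I_n -> {set 'I_n}) : finType :=
  {u : bool * 'I_n * 'I_n | valid_pair D S u}.

Definition cvec (R : realType) (n p : nat) (x : 'I_n -> 'I_p -> R)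
  (i j : 'I_n) (k : 'I_p) : R := (x i k - x j k) ^+ 2.

Definition Cmat (R : realType) (n p : nat) (x : 'I_n -> 'I_p -> R)
  (D S : 'I_n -> {set 'I_n}) (k : 'I_p) (u : pidx D S) : R :=
  let: (b, i, j) := val u in if b then cvec x i j k else - cvec x i j k.

Definition tvec (R : realType) (n : nat) (D S : 'I_n -> {set 'I_n})
  (L U : R) (u : pidx D S) : R :=
  let: (b, _, _) := val u in if b then L else - U.

Definition Calpha (R : realType) (n p : nat) (x : 'I_n -> 'I_p -> R)
  (D S : 'I_n -> {set 'I_n}) (a : pidx D S -> R) (k : 'I_p) : R :=
  \sum_(u : pidx D S) Cmat x k u * a u.

Definition mlam (R : realType) (n p : nat) (x : 'I_n -> 'I_p -> R)
  (D S : 'I_n -> {set 'I_n}) (lam eta : R) (a : pidx D S -> R) (k : 'I_p) : R :=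
  (lam * eta)^-1 * Num.max (Calpha x a k - lam) 0.

Definition Dual (R : realType) (n p : nat) (x : 'I_n -> 'I_p -> R)
  (D S : 'I_n -> {set 'I_n}) (L U lam eta : R) (a : pidx D S -> R) : R :=
  - (1/4) * (\sum_(u : pidx D S) a u ^+ 2)
  + (\sum_(u : pidx D S) tvec L U u * a u)
  - (lam * eta / 2) * (\sum_(k : 'I_p) mlam x lam eta a k ^+ 2).

Definition DualF (R : realType) (n p : nat) (x : 'I_n -> 'I_p -> R)
  (D S : 'I_n -> {set 'I_n}) (L U lam eta : R) (F : {set 'I_p})
  (a : pidx D S -> R) : R :=
  - (1/4) * (\sum_(u : pidx D S) a u ^+ 2)
  + (\sum_(u : pidx D S) tvec L U u * a u)
  - (lam * eta / 2) * (\sum_(k in F) mlam x lam eta a k ^+ 2).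

Definition is_max_nonneg (R : realType) (I : finType) (f : (I -> R) -> R)
  (a : I -> R) : Prop :=
  (forall u, 0 <= a u) /\ (forall b : I -> R, (forall u, 0 <= b u) -> f b <= f a).

Definition working_set (R : realType) (n p : nat) (x : 'I_n -> 'I_p -> R)
  (D S : 'I_n -> {set 'I_n}) (lam : R) (a : pidx D S -> R) : {set 'I_p} :=
  [set k | lam < Calpha x a k].

(* Main.v *)
Require Import Defs.
From HB Require Import structures.
From mathcomp Require Import all_boot all_order all_algebra.
From mathcomp Require Import reals.
From mathcomp Require Import ring lra.
From Stdlib Require Import Classical FunctionalExtensionality.
Import Order.TTheory GRing.Theory Num.Theory.
Set Implicit Arguments. Unset Strict Implicit. Unset Printing Implicit Defensive.
Local Open Scope ring_scope.

Definition comb (R : realType) (I : finType) (s : R) (a b : I -> R) : I -> R :=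
  fun u => (1 - s) * a u + s * b u.

Definition Base (R : realType) (n : nat) (D S : 'I_n -> {set 'I_n}) (L U : R)
  (a : pidx D S -> R) : R :=
  - (1/4) * (\sum_(u : pidx D S) a u ^+ 2)
  + (\sum_(u : pidx D S) tvec L U u * a u).

Lemma DualFE (R : realType) (n p : nat) (x : 'I_n -> 'I_p -> R)
  (D S : 'I_n -> {set 'I_n}) (L U lam eta : R) (F : {set 'I_p}) (a : pidx D S -> R) :
  DualF x L U lam eta F a = Base L U a - (lam * eta / 2) * (\sum_(k in F) mlam x lam eta a k ^+ 2).
Proof. by []. Qed.

Lemma BaseE (R : realType) (n : nat) (D S : 'I_n -> {set 'I_n}) (L U : R) (a : pidx D S -> R) :
  Base L U a = \sum_(u : pidx D S) (- (1/4) * a u ^+ 2 + tvec L U u * a u).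
Proof. by rewrite /Base big_split /= mulr_sumr. Qed.

Lemma Base_comb (R : realType) (n : nat) (D S : 'I_n -> {set 'I_n}) (L U : R) (s : R) (a b : pidx D S -> R) :
  Base L U (comb s a b) = (1 - s) * Base L U a + s * Base L U b
    + s * (1 - s) / 4 * \sum_(u : pidx D S) (a u - b u) ^+ 2.
Proof.
rewrite !BaseE !mulr_sumr -!big_split /=; apply: eq_bigr => u _.
rewrite /comb; ring.
Qed.

Lemma Calpha_comb (R : realType) (n p : nat) (x : 'I_n -> 'I_p -> R)
  (D S : 'I_n -> {set 'I_n}) (s : R) (a b : pidx D S -> R) k :
  Calpha x (comb s a b) k = (1 - s) * Calpha x a k + s * Calpha x b k.
Proof.
rewrite /Calpha !mulr_sumr -big_split /=; apply: eq_bigr => u _.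
rewrite /comb; ring.
Qed.

Lemma mlam_ge0 (R : realType) (n p : nat) (x : 'I_n -> 'I_p -> R)
  (D S : 'I_n -> {set 'I_n}) (lam eta : R) (a : pidx D S -> R) k :
  0 < lam -> 0 < eta -> 0 <= mlam x lam eta a k.
Proof.
move=> hl he; rewrite /mlam mulr_ge0 //.
  by rewrite invr_ge0 mulr_ge0 // ltW.
by rewrite le_max; apply/orP; right.
Qed.

Lemma mlam_convex (R : realType) (n p : nat) (x : 'I_n -> 'I_p -> R)
  (D S : 'I_n -> {set 'I_n}) (lam eta : R) (s : R) (a b : pidx D S -> R) k :
  0 < lam -> 0 < eta -> 0 <= s <= 1 ->
  mlam x lam eta (comb s a b) k ^+ 2 <=
    (1 - s) * mlam x lam eta a k ^+ 2 + s * mlam x lam eta b k ^+ 2.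
Proof.
move=> hl he /andP[s0 s1].
rewrite /mlam Calpha_comb.
set kap := (lam * eta)^-1.
have kap0 : 0 <= kap by rewrite invr_ge0 mulr_ge0 // ltW.
set z1 := Calpha x a k - lam; set z2 := Calpha x b k - lam.
have -> : (1 - s) * Calpha x a k + s * Calpha x b k - lam = (1 - s) * z1 + s * z2.
  by rewrite /z1 /z2; ring.
set p1 := Num.max z1 0; set p2 := Num.max z2 0.
set pg := Num.max ((1 - s) * z1 + s * z2) 0.
have h1 : z1 <= p1 by rewrite /p1 le_max lexx.
have h1' : 0 <= p1 by rewrite /p1 le_max; apply/orP; right.
have h2 : z2 <= p2 by rewrite /p2 le_max lexx.
have h2' : 0 <= p2 by rewrite /p2 le_max; apply/orP; right.
have hpg0 : 0 <= pg by rewrite /pg le_max; apply/orP; right.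
have hs1 : 0 <= 1 - s by rewrite subr_ge0.
have hpg : pg <= (1 - s) * p1 + s * p2.
  rewrite /pg ge_max; apply/andP; split.
    by rewrite lerD // ler_wpM2l.
  by rewrite addr_ge0 // mulr_ge0.
have hq : 0 <= (1 - s) * p1 + s * p2 by rewrite addr_ge0 // mulr_ge0.
have : pg ^+ 2 <= (1 - s) * p1 ^+ 2 + s * p2 ^+ 2.
  apply: (le_trans (y := ((1 - s) * p1 + s * p2) ^+ 2)).
    by rewrite ler_sqr.
  have hh : 0 <= s * (1 - s) * (p1 - p2) ^+ 2.
    by rewrite mulr_ge0 ?sqr_ge0 // mulr_ge0.
  rewrite -subr_ge0; apply: (le_trans hh); rewrite le_eqVlt; apply/orP; left; apply/eqP; ring.
move=> h.
rewrite !exprMn; apply: (le_trans (ler_wpM2l (exprn_ge0 2 kap0) h)).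
by rewrite le_eqVlt; apply/orP; left; apply/eqP; ring.
Qed.

Lemma mlam_zero (R : realType) (n p : nat) (x : 'I_n -> 'I_p -> R)
  (D S : 'I_n -> {set 'I_n}) (lam eta : R) (a : pidx D S -> R) k :
  Calpha x a k <= lam -> mlam x lam eta a k = 0.
Proof.
move=> h; rewrite /mlam max_r ?mulr0 //.
by rewrite subr_le0.
Qed.

Lemma mlam_scale (R : realType) (n p : nat) (x : 'I_n -> 'I_p -> R)
  (D S : 'I_n -> {set 'I_n}) (lam eta : R) (s : R) (a b : pidx D S -> R) k :
  0 < lam -> 0 < eta -> 0 <= s <= 1 -> Calpha x a k <= lam ->
  mlam x lam eta (comb s a b) k ^+ 2 <= s ^+ 2 * mlam x lam eta b k ^+ 2.
Proof.
move=> hl he /andP[s0 s1] ha.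
rewrite /mlam Calpha_comb.
set kap := (lam * eta)^-1.
have kap0 : 0 <= kap by rewrite invr_ge0 mulr_ge0 // ltW.
set z1 := Calpha x a k - lam; set z2 := Calpha x b k - lam.
have -> : (1 - s) * Calpha x a k + s * Calpha x b k - lam = (1 - s) * z1 + s * z2.
  by rewrite /z1 /z2; ring.
have hz1 : z1 <= 0 by rewrite /z1 subr_le0.
set p2 := Num.max z2 0.
set pg := Num.max ((1 - s) * z1 + s * z2) 0.
have h2 : z2 <= p2 by rewrite /p2 le_max lexx.
have h2' : 0 <= p2 by rewrite /p2 le_max; apply/orP; right.
have hpg0 : 0 <= pg by rewrite /pg le_max; apply/orP; right.
have hs1 : 0 <= 1 - s by rewrite subr_ge0.
have hpg : pg <= s * p2.
  rewrite /pg ge_max; apply/andP; split; last by rewrite mulr_ge0.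
  have : (1 - s) * z1 <= 0 by rewrite mulr_ge0_le0.
  have : s * z2 <= s * p2 by rewrite ler_wpM2l.
  lra.
have : pg ^+ 2 <= (s * p2) ^+ 2 by rewrite ler_sqr ?nnegrE ?mulr_ge0.
move=> h.
rewrite !exprMn; apply: (le_trans (ler_wpM2l (exprn_ge0 2 kap0) h)).
by rewrite le_eqVlt; apply/orP; left; apply/eqP; ring.
Qed.

Lemma DualF_concave (R : realType) (n p : nat) (x : 'I_n -> 'I_p -> R)
  (D S : 'I_n -> {set 'I_n}) (L U lam eta : R) (F : {set 'I_p}) (s : R)
  (a b : pidx D S -> R) :
  0 < lam -> 0 < eta -> 0 <= s <= 1 ->
  (1 - s) * DualF x L U lam eta F a + s * DualF x L U lam eta F b
   + s * (1 - s) / 4 * (\sum_(u : pidx D S) (a u - b u) ^+ 2)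
  <= DualF x L U lam eta F (comb s a b).
Proof.
move=> hl he hs.
rewrite !DualFE Base_comb.
set c := lam * eta / 2.
have hc : 0 <= c.
  have : 0 < lam * eta by rewrite mulr_gt0.
  rewrite /c; lra.
have hsum : \sum_(k in F) mlam x lam eta (comb s a b) k ^+ 2 <=
   (1 - s) * \sum_(k in F) mlam x lam eta a k ^+ 2 + s * \sum_(k in F) mlam x lam eta b k ^+ 2.
  rewrite !mulr_sumr -big_split /=; apply: ler_sum => k _; exact: (mlam_convex _ _ _ _ hl he hs).
have := ler_wpM2l hc hsum.
set X := \sum_(k in F) _; set A := \sum_(k in F) _; set B := \sum_(k in F) _.
move=> h.
have e : c * ((1 - s) * A + s * B) = (1 - s) * (c * A) + s * (c * B) by ring.
rewrite e in h.
have e2 : (1 - s) * (Base L U a - c * A) + s * (Base L U b - c * B) =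
   (1 - s) * Base L U a + s * Base L U b - ((1 - s) * (c * A) + s * (c * B)) by ring.
rewrite e2; lra.
Qed.

Lemma small_le0 (R : realType) (d K : R) :
  0 <= K -> (forall s, 0 < s -> s <= 1 -> d <= s * K) -> d <= 0.
Proof.
move=> hK H; case: (lerP d 0) => // hd.
have hdk : 0 < d + K by lra.
have hs : 0 < d / (d + K) by rewrite divr_gt0.
have hs1 : d / (d + K) <= 1 by rewrite ler_pdivrMr // mul1r; lra.
have h := H _ hs hs1.
have := ler_wpM2r (ltW hdk) h.
have -> : d / (d + K) * K * (d + K) = d * K by field; rewrite gt_eqF.
move=> h2; exfalso.
have : 0 < d * d by rewrite mulr_gt0.
nra.
Qed.

Lemma comb_ge0 (R : realType) (I : finType) (s : R) (a b : I -> R) :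
  0 <= s <= 1 -> (forall u, 0 <= a u) -> (forall u, 0 <= b u) ->
  forall u, 0 <= comb s a b u.
Proof.
move=> /andP[s0 s1] ha hb u; by rewrite /comb addr_ge0 ?mulr_ge0 // subr_ge0.
Qed.

Lemma DualF_mono (R : realType) (n p : nat) (x : 'I_n -> 'I_p -> R)
  (D S : 'I_n -> {set 'I_n}) (L U lam eta : R) (F1 F2 : {set 'I_p})
  (a : pidx D S -> R) :
  0 < lam -> 0 < eta -> F1 \subset F2 ->
  DualF x L U lam eta F2 a <= DualF x L U lam eta F1 a.
Proof.
move=> hl he hF; rewrite !DualFE (big_setID (A:=F2) F1) /=.
rewrite (setIidPr hF).
have hc : 0 <= lam * eta / 2.
  have : 0 < lam * eta by rewrite mulr_gt0.
  lra.
have h0 : 0 <= \sum_(i in F2 :\: F1) mlam x lam eta a i ^+ 2.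
  by apply: sumr_ge0 => i _; rewrite sqr_ge0.
rewrite lerB // ler_wpM2l // lerDl //.
Qed.

Lemma DualF_ws (R : realType) (n p : nat) (x : 'I_n -> 'I_p -> R)
  (D S : 'I_n -> {set 'I_n}) (L U lam eta : R) (F : {set 'I_p})
  (a : pidx D S -> R) :
  DualF x L U lam eta F a = DualF x L U lam eta (F :&: working_set x lam a) a.
Proof.
rewrite !DualFE (big_setID (A:=F) (working_set x lam a)) /=.
rewrite [\sum_(i in F :\: _) _]big1 ?addr0 //.
move=> k; rewrite !inE => /andP[h _].
by rewrite mlam_zero ?expr0n // leNgt.
Qed.

Lemma step2 (R : realType) (n p : nat) (x : 'I_n -> 'I_p -> R)
  (D S : 'I_n -> {set 'I_n}) (L U lam eta : R) (W : {set 'I_p})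
  (a : pidx D S -> R) :
  0 < lam -> 0 < eta -> (forall u, 0 <= a u) ->
  (forall b : pidx D S -> R, (forall u, 0 <= b u) -> DualF x L U lam eta W b <= DualF x L U lam eta W a) ->
  forall b : pidx D S -> R, (forall u, 0 <= b u) ->
  DualF x L U lam eta (W :&: working_set x lam a) b <=
  DualF x L U lam eta (W :&: working_set x lam a) a.
Proof.
move=> hl he ha hmax b hb.
set G := W :&: working_set x lam a.
set c := lam * eta / 2.
have hc : 0 <= c.
  have : 0 < lam * eta by rewrite mulr_gt0.
  rewrite /c; lra.
have eWG : DualF x L U lam eta W a = DualF x L U lam eta G a by rewrite DualF_ws.
set M := \sum_(k in W :\: working_set x lam a) mlam x lam eta b k ^+ 2.
have hM : 0 <= M by apply: sumr_ge0 => i _; rewrite sqr_ge0.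
rewrite -subr_le0.
apply: (@small_le0 _ _ (c * M)); first by rewrite mulr_ge0.
move=> s s0 s1.
have hs : 0 <= s <= 1 by rewrite ltW.
have hg := comb_ge0 hs ha hb.
have h1 := hmax _ hg.
have e : DualF x L U lam eta W (comb s a b) = DualF x L U lam eta G (comb s a b)
   - c * \sum_(k in W :\: working_set x lam a) mlam x lam eta (comb s a b) k ^+ 2.
  by rewrite !DualFE (big_setID (A:=W) (working_set x lam a)) /= -/c; ring.
have hS : \sum_(k in W :\: working_set x lam a) mlam x lam eta (comb s a b) k ^+ 2
   <= s ^+ 2 * M.
  rewrite /M mulr_sumr; apply: ler_sum => k; rewrite !inE => /andP[hk _].
  by apply: mlam_scale => //; rewrite leNgt.
have hcS := ler_wpM2l hc hS.
have hconc := @DualF_concave _ _ _ x D S L U lam eta G s a b hl he hs.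
have hsq : 0 <= s * (1 - s) / 4 * \sum_(u : pidx D S) (a u - b u) ^+ 2.
  apply: mulr_ge0; last by apply: sumr_ge0 => u _; rewrite sqr_ge0.
  apply: divr_ge0 => //; apply: mulr_ge0; [exact: ltW | by rewrite subr_ge0].
have key : s * (DualF x L U lam eta G b - DualF x L U lam eta G a) <= s * (s * (c * M)).
  have -> : s * (s * (c * M)) = c * (s ^+ 2 * M) by ring.
  rewrite e eWG in h1.
  have -> : s * (DualF x L U lam eta G b - DualF x L U lam eta G a) =
     (1 - s) * DualF x L U lam eta G a + s * DualF x L U lam eta G b
     - DualF x L U lam eta G a by ring.
  lra.
by rewrite ler_pM2l in key.
Qed.

Lemma sum_split (R : realType) (p : nat) (F : {set 'I_p}) (f : 'I_p -> R) :
  \sum_(k : 'I_p) f k = \sum_(k in F) f k + \sum_(k | k \notin F) f k.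
Proof. by rewrite (bigID (fun k => k \in F)) /=. Qed.

Lemma DualE (R : realType) (n p : nat) (x : 'I_n -> 'I_p -> R)
  (D S : 'I_n -> {set 'I_n}) (L U lam eta : R) (F : {set 'I_p}) (a : pidx D S -> R) :
  Dual x L U lam eta a = DualF x L U lam eta F a
     - (lam * eta / 2) * \sum_(k | k \notin F) mlam x lam eta a k ^+ 2.
Proof. by rewrite DualFE /Dual /Base (sum_split F); ring. Qed.

Lemma termC (R : realType) (n p : nat) (x : 'I_n -> 'I_p -> R)
  (D S : 'I_n -> {set 'I_n}) (L U lam eta : R) (a : pidx D S -> R) :
  0 < lam -> 0 < eta -> (forall u, 0 <= a u) ->
  (forall b : pidx D S -> R, (forall u, 0 <= b u) ->
     DualF x L U lam eta (working_set x lam a) b <=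
     DualF x L U lam eta (working_set x lam a) a) ->
  is_max_nonneg (Dual x L U lam eta) a.
Proof.
move=> hl he ha hmax; split => // b hb.
have hc : 0 <= lam * eta / 2.
  have : 0 < lam * eta by rewrite mulr_gt0.
  lra.
rewrite (DualE _ _ _ _ _ (working_set x lam a) b) (DualE _ _ _ _ _ (working_set x lam a) a).
rewrite [X in _ <= _ - _ * X]big1 ?mulr0 ?subr0; last first.
  move=> k; rewrite inE -leNgt => h.
  by rewrite mlam_zero ?expr0n.
have h0 : 0 <= \sum_(k | k \notin working_set x lam a) mlam x lam eta b k ^+ 2.
  by apply: sumr_ge0 => i _; rewrite sqr_ge0.
have := hmax b hb.
have := mulr_ge0 hc h0.
lra.
Qed.

Lemma keyA (R : realType) (n p : nat) (x : 'I_n -> 'I_p -> R)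
  (D S : 'I_n -> {set 'I_n}) (L U lam eta : R) (W : {set 'I_p})
  (a b : pidx D S -> R) :
  0 < lam -> 0 < eta ->
  is_max_nonneg (DualF x L U lam eta W) a ->
  is_max_nonneg (DualF x L U lam eta (working_set x lam a)) b ->
  DualF x L U lam eta (working_set x lam a) b <= DualF x L U lam eta W a /\
  (DualF x L U lam eta (working_set x lam a) b = DualF x L U lam eta W a -> b = a).
Proof.
move=> hl he [ha hma] [hb hmb].
set G := W :&: working_set x lam a.
have hst := step2 hl he ha hma.
have h1 : DualF x L U lam eta (working_set x lam a) b <= DualF x L U lam eta G b.
  by apply: DualF_mono => //; rewrite subsetIr.
have h2 := hst b hb.
have h3 : DualF x L U lam eta W a = DualF x L U lam eta G a by rewrite DualF_ws.
split; first by rewrite h3; apply: (le_trans h1).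
move=> heq.
have hGb : DualF x L U lam eta G b = DualF x L U lam eta G a.
  apply/eqP; rewrite eq_le h2 /=; rewrite -h3 -heq //.
have hs : 0 <= (2^-1 : R) <= 1.
  apply/andP; split; first by rewrite invr_ge0.
  by rewrite invf_le1 // ler1n.
have hm := hst _ (comb_ge0 hs ha hb).
have hc := @DualF_concave _ _ _ x D S L U lam eta G 2^-1 a b hl he hs.
set Z := \sum_(u : pidx D S) (a u - b u) ^+ 2 in hc.
have hZ : Z <= 0.
  have e : 2^-1 * (1 - 2^-1) / 4 = 16^-1 :> R by field.
  rewrite e hGb in hc.
  have e2 : (1 - 2^-1) * DualF x L U lam eta G a + 2^-1 * DualF x L U lam eta G a
     = DualF x L U lam eta G a :> R by field.
  rewrite e2 in hc.
  have h := le_trans hc hm.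
  have h16 : 0 < 16^-1 :> R by rewrite invr_gt0.
  rewrite -(pmulr_rle0 Z h16).
  lra.
have hZ0 : Z = 0 by apply/eqP; rewrite eq_le hZ sumr_ge0 // => u _; rewrite sqr_ge0.
apply: functional_extensionality => u.
have := psumr_eq0P (fun u _ => sqr_ge0 (a u - b u)) hZ0 (i := u) isT.
by move/eqP; rewrite sqrf_eq0 subr_eq0 => /eqP.
Qed.

Theorem theorem9 (R : realType) (n K p : nat)
  (x : 'I_n -> 'I_p -> R) (D S : 'I_n -> {set 'I_n}) (L U eta lam : R)
  (hn : (1 <= n)%N) (hK : (1 <= K)%N) (hp : (1 <= p)%N)
  (hx : forall i k, 0 <= x i k)
  (hD : forall i, #|D i| = K) (hS : forall i, #|S i| = K)
  (hLU : U <= L) (hU : 0 <= U) (heta : 0 < eta) (hlam : 0 < lam)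
  (alpha : nat -> pidx D S -> R)
  (h0 : forall u, 0 <= alpha 0%N u)
  (hstep : forall t : nat,
     is_max_nonneg (DualF x L U lam eta (working_set x lam (alpha t)))
                   (alpha t.+1)) :
  exists T : nat, is_max_nonneg (Dual x L U lam eta) (alpha T).
Proof.
have key t := keyA hlam heta (hstep t) (hstep t.+1).
case: (classic (exists t, alpha t.+2 = alpha t.+1)) => [[t ht] | hno].
  exists t.+1.
  have [hg hm] := hstep t.+1.
  rewrite ht in hg hm.
  exact: termC.
exfalso.
pose W t := working_set x lam (alpha t).
pose v t := DualF x L U lam eta (W t) (alpha t.+1).
have dec t : v t.+1 < v t.
  have [hle heq] := key t.
  rewrite lt_neqAle hle andbT; apply/eqP => e.
  by apply: hno; exists t; apply: heq.
have decl i j : (i < j)%N -> v j < v i.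
  elim: j => // j IH; rewrite ltnS leq_eqVlt => /orP[/eqP -> | h].
    exact: dec.
  exact: (lt_trans (dec j) (IH h)).
have inj i j : W i = W j -> i = j.
  move=> e.
  have veq : v i = v j.
    have [hi mi] := hstep i; have [hj mj] := hstep j.
    rewrite /v; apply/eqP; rewrite eq_le; apply/andP; split.
      by rewrite e; apply: mj.
    by rewrite -e; apply: mi.
  case: (ltngtP i j) => // h; have := decl _ _ h; by rewrite veq ltxx.
pose f := fun i : 'I_(#|{set 'I_p}|.+1) => W i.
have := leq_card f (fun i j e => val_inj (inj _ _ e)).
by rewrite card_ord ltnn.
Qed.
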